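(* Let $N\ge 1$ be an integer and let $g,h,u_m,\alpha_1,\delta_h,\delta_q$ be real numbers. Define $c_i=\frac{i+1}{2i+1}\alpha_1$ and $a_i=\frac{i-1}{2i-1}\alpha_1$ for $i=2,\dots,N$. Let $\boldsymbol{A}_H\in\mathbb{R}^{(N+3)\times(N+3)}$ be the matrix (rows and columns indexed $1,\dots,N+3$) whose only nonzero entries are: - row 1: entry $(1,2)=1$; - row 2: $(2,1)=gh-u_m^2-\tfrac13\alpha_1^2$, $(2,2)=2u_m$, $(2,3)=\tfrac23\alpha_1$, $(2,N+3)=gh$; - rows $3,\dots,N+2$ (the ''moment block'', row $k+2$ corresponding to moment $k=1,\dots,N$): diagonal entries $(k+2,k+2)=u_m$ for $k=1,\dots,N$; superdiagonal entries $(k+2,k+3)=c_{k+1}$ for $k=1,\dots,N-1$; subdiagonal entries $(k+2,k+1)=a_k$ for $k=2,\dots,N$; in addition $(3,1)=-2u_m\alpha_1$, $(3,2)=2\alpha_1$, and, if $N\ge2$, $(4,1)=-\tfrac23\alpha_1^2$; - row $N+3$: $(N+3,1)=\delta_h$ and $(N+3,j)=\delta_q$ for $j=2,\dots,N+2$, $(N+3,N+3)=0$. Let $A_2\in\mathbb{R}^{N\times N}$ be the tridiagonal matrix with zero diagonal, superdiagonal entries $c_2,\dots,c_N$ and subdiagonal entries $a_2,\dots,a_N$ (for $N=1$, $A_2$ is the $1\times1$ zero matrix). Then the characteristic polynomial $\chi_A(\lambda)=\det(\boldsymbol{A}_H-\lambda I)$ satisfies $$\chi_A(\lambda)=\Big[(-\lambda)\big((\lambda-u_m)^2-gh-\alpha_1^2\big)+gh\,(\delta_h+\lambda\delta_q+2\alpha_1\delta_q)\Big]\cdot\chi_{A_2}(\lambda-u_m),$$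 where $\chi_{A_2}(\lambda-u_m)=\det\big(A_2-(\lambda-u_m)I\big)$.
   Context: $\boldsymbol{A}_H$ is the system matrix of the Hyperbolic Shallow Water Exner Moment (HSWEM) model in the conservative variables $(h,hu_m,h\alpha_1,\dots,h\alpha_N,b)$, where $h$ is water height, $g$ gravitational acceleration, $u_m$ mean velocity, $\alpha_1,\dots,\alpha_N$ the Legendre moment coefficients of the vertical velocity profile, $b$ the bottom, and $\delta_h=\partial_h Q_b$, $\delta_q=\partial_{hu_m}Q_b$ are partial derivatives of the solid transport discharge $Q_b$; for the statement these are just real parameters. *)

(* Defs.v *)
From mathcomp Require Import all_boot all_order all_algebra.
Set Implicit Arguments. Unset Strict Implicit. Unset Printing Implicit Defensive.
Import Order.TTheory GRing.Theory Num.Theory.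
Local Open Scope ring_scope.

Section HSWEM.
Variable R : realFieldType.

Definition coef_c (al : R) (i : nat) : R := (i.+1)%:R / (i.*2.+1)%:R * al.
Definition coef_a (al : R) (i : nat) : R := (i.-1)%:R / (i.*2.-1)%:R * al.

(* Entry (r, col) of A_H, with 1-based indices r, col in 1..N+3. *)
Definition AH_entry (N : nat) (g h um al dh dq : R) (r col : nat) : R :=
  if r == 1%N then (if col == 2%N then 1 else 0)
  else if r == 2%N then
    (if col == 1%N then g * h - um ^+ 2 - al ^+ 2 / 3%:R
     else if col == 2%N then 2%:R * um
     else if col == 3%N then 2%:R / 3%:R * al
     else if col == N + 3 then g * h
     else 0)
  else if r == N + 3 then
    (if col == 1%N then dh
     else if (2 <= col <= N + 2)%N then dq
     else 0)
  else (* moment rows r = k+2, k = 1..N *)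
    (if col == r then um
     else if (col == r.+1) && (r.+1 <= N + 2)%N then coef_c al (r - 2).+1
     else if (col.+1 == r) && (4 <= r)%N then coef_a al (r - 2)
     else if (r == 3%N) && (col == 1%N) then - (2%:R * um * al)
     else if (r == 3%N) && (col == 2%N) then 2%:R * al
     else if (r == 4%N) && (col == 1%N) then - (2%:R / 3%:R * al ^+ 2)
     else 0).

Definition AH (N : nat) (g h um al dh dq : R) : 'M[R]_(N + 3) :=
  \matrix_(i, j) AH_entry N g h um al dh dq i.+1 j.+1.

(* The NxN tridiagonal matrix A_2: zero diagonal, superdiagonal c_2..c_N,
   subdiagonal a_2..a_N (1-based row k: (k,k+1) = c_{k+1}, (k,k-1) = a_k). *)
Definition A2 (N : nat) (al : R) : 'M[R]_N :=
  \matrix_(i, j)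
    (if j.+1 == i.+2 then coef_c al i.+2
     else if j.+2 == i.+1 then coef_a al i.+1
     else 0).

End HSWEM.

(* Main.v *)
Require Import Defs.
From mathcomp Require Import all_boot all_order all_algebra zify ring lra.
Import GRing.Theory Num.Theory.
Local Open Scope ring_scope.

Section S.
Variables (R : realFieldType) (N : nat) (hN : (1 <= N)%N) (g h um al dh dq lam : R).

Definition F (i j : nat) : R := AH_entry N g h um al dh dq i.+1 j.+1 - (if i == j then lam else 0).
Definition G (i j : nat) : R := F i j + (if j == 0%N then lam * F i 1 + 2%:R * al * F i 2 else 0).

Ltac ent := rewrite /G /F /AH_entry; repeat (case: ifP => /=; move=> ?); try (exfalso; lia).

Lemma G01 : G 0 1 = 1.
Proof. ent. all: ring. Qed.
Lemma G0j j : j != 1%N -> G 0 j = 0.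
Proof. move=> hj; ent. all: ring. Qed.
Lemma G10 : G 1 0 = g * h - (lam - um) ^+ 2 + al ^+ 2.
Proof. ent. by field. Qed.
Lemma GN0 : G N.+2 0 = dh + lam * dq + 2%:R * al * dq.
Proof. ent. all: try (have e: (i.+3 - 2 = i.+1)%N by lia; rewrite e). all: try (field; done). Qed.
Lemma Gi0 i : (i < N)%N -> G i.+2 0 = 0.
Proof. move=> hi; ent. all: try (field; done). have e: (i.+3 - 2 = 2)%N by lia. rewrite e /coef_a. have ->: (2.*2.-1 = 3)%N by []. have ->: (2.-1 = 1)%N by []. by field. Qed.
Lemma GiL i : (i < N)%N -> G i.+2 N.+2 = 0.
Proof. move=> hi; ent. all: try (have e: (i.+3 - 2 = i.+1)%N by lia; rewrite e). all: try (have e: (i.+1 = 2)%N by lia; rewrite e /coef_a /=). all: try (field; done). Qed.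
Lemma GLL : G N.+2 N.+2 = - lam.
Proof. ent. all: try (have e: (i.+3 - 2 = i.+1)%N by lia; rewrite e). all: try (have e: (i.+1 = 2)%N by lia; rewrite e /coef_a /=). all: try (field; done). Qed.
Lemma G1L : G 1 N.+2 = g * h.
Proof. ent. all: try (have e: (i.+3 - 2 = i.+1)%N by lia; rewrite e). all: try (have e: (i.+1 = 2)%N by lia; rewrite e /coef_a /=). all: try (field; done). Qed.
Lemma GQ i j : (i < N)%N -> (j < N)%N -> G i.+2 j.+2 =
   (if j.+1 == i.+2 then coef_c al i.+2
     else if j.+2 == i.+1 then coef_a al i.+1
     else 0) - (if i == j then lam - um else 0).
Proof. move=> hi hj; ent. all: try (have e: (i.+3 - 2 = i.+1)%N by lia; rewrite e). all: try (have e: (i.+1 = 2)%N by lia; rewrite e /coef_a /=). all: try (field; done). Qed.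

Definition Mf n (f : nat -> nat -> R) : 'M[R]_n := \matrix_(i, j) f i j.

Lemma Mf_cast m n (e : m = n) f : \det (Mf m f) = \det (Mf n f).
Proof. by case: n / e. Qed.

Lemma Mf_minor n f (i0 j0 : 'I_n.+1) :
  row' i0 (col' j0 (Mf n.+1 f)) = Mf n (fun i j => f (bump i0 i) (bump j0 j)).
Proof. by apply/matrixP => i j; rewrite !mxE. Qed.

Lemma bumpL (hh k : nat) : (k < hh)%N -> bump hh k = k.
Proof. by move=> hk; rewrite /bump leqNgt hk. Qed.
Lemma bumpR (hh k : nat) : (hh <= k)%N -> bump hh k = k.+1.
Proof. by move=> hk; rewrite /bump hk. Qed.
Lemma bump0 k : bump 0 k = k.+1.
Proof. by rewrite bumpR. Qed.

Lemma sum_sel n (f : nat -> R) k0 c : (k0 < n)%N ->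
  \sum_(k < n) f k * (if (k : nat) == k0 then c else 0) = f k0 * c.
Proof.
move=> hk0; rewrite (bigD1 (Ordinal hk0)) //= eqxx big1 ?addr0 // => k hk.
by rewrite -[(k:nat) == k0]/(k == Ordinal hk0) (negbTE hk) mulr0.
Qed.

Definition Ef (k c : nat) : R := (if k == c then 1 else 0)
   + (if k == 1%N then (if c == 0%N then lam else 0) else 0)
   + (if k == 2%N then (if c == 0%N then 2%:R * al else 0) else 0).

Lemma colop : \det (Mf N.+3 F) = \det (Mf N.+3 G).
Proof.
have -> : Mf N.+3 G = Mf N.+3 F *m Mf N.+3 Ef.
  apply/matrixP => i j; rewrite !mxE.
  under eq_bigr do rewrite !mxE /Ef !mulrDr.
  rewrite !big_split /= !(sum_sel _ (F i)) //.
  by rewrite /G; case: ifP => _; ring.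
have dE : \det (Mf N.+3 Ef) = 1.
  rewrite det_trig.
    rewrite big1 // => k _; rewrite mxE /Ef.
    by repeat (case: ifP => ?); try lia; ring.
  apply/is_trig_mxP => a b hab; rewrite mxE /Ef.
  by repeat (case: ifP => ?); try lia; ring.
by rewrite det_mulmx dE mulr1.
Qed.

Definition Q (i j : nat) : R :=
  (if j.+1 == i.+2 then coef_c al i.+2
     else if j.+2 == i.+1 then coef_a al i.+1
     else 0) - (if i == j then lam - um else 0).

Lemma sgn2 k (x y : R) : (-1)^+(k.+1 + 0) * (x * ((-1)^+(0 + k) * y)) = - (x * y).
Proof.
rewrite addn0 add0n exprS.
have e: (-1:R)^+k = (-1)^+(odd k) by rewrite signr_odd.
by rewrite e; case: (odd k); rewrite ?expr0 ?expr1; ring.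
Qed.

Lemma sgnkk k : (-1:R)^+(k + k) = 1.
Proof. by rewrite exprD -exprMn mulrNN mulr1 expr1n. Qed.

Lemma b00 : bump 0 0 = 1%N. Proof. by []. Qed.

Lemma detK1 : \det (Mf N.+1 (fun i j : nat =>
   G (bump 0 (bump 0 i)) (bump (bump 0 0) (bump 0 j)))) = - lam * \det (Mf N Q).
Proof.
rewrite (expand_det_col _ ord_max) (bigD1 ord_max) //= big1 ?addr0; last first.
  move=> i hi; rewrite mxE.
  have h1 : ((i:nat) != N) by exact hi.
  have h3 := ltn_ord i.
  rewrite !bump0 (bumpR 1) // GiL ?mul0r //; lia.
rewrite mxE /cofactor Mf_minor /= !bump0 (bumpR 1) // GLL sgnkk mul1r.
congr (_ * \det _); apply/matrixP => i j; rewrite !mxE.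
rewrite (bumpL _ _ (ltn_ord i)) (bumpL _ _ (ltn_ord j)) !bump0 (bumpR 1) //.
by rewrite GQ.
Qed.

Lemma detK2 : \det (Mf N.+1 (fun i j : nat =>
   G (bump 0 (bump N.+1 i)) (bump (bump 0 0) (bump 0 j)))) =
   g * h * ((-1) ^+ (0 + N) * \det (Mf N Q)).
Proof.
rewrite (expand_det_col _ ord_max) (bigD1 ord0) //= big1 ?addr0; last first.
  move=> i hi; rewrite mxE.
  have h1 : ((i:nat) != 0%N) by exact hi.
  have h3 := ltn_ord i.
  rewrite (bumpL _ _ h3) !bump0 (bumpR 1) //.
  have e : (i.+1 = (i.-1).+2)%N by lia.
  rewrite e GiL ?mul0r //; lia.
rewrite mxE /cofactor Mf_minor /= (bumpL N.+1 0) // !bump0 (bumpR 1) // G1L.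
congr (_ * (_ * \det _)); apply/matrixP => i j; rewrite !mxE.
have hi := ltn_ord i.
rewrite (bumpL _ _ (ltn_ord j)) !bump0 (bumpL N.+1 i.+1) // (bumpR 1) //.
by rewrite GQ.
Qed.

Lemma mainG : \det (Mf N.+3 G) =
  (lam * (g * h - (lam - um) ^+ 2 + al ^+ 2) + g * h * (dh + lam * dq + 2%:R * al * dq))
  * \det (Mf N Q).
Proof.
rewrite (expand_det_row _ ord0) (bigD1 (lift ord0 ord0)) //= big1 ?addr0; last first.
  move=> j hj; rewrite mxE G0j ?mul0r //.
rewrite mxE G01 mul1r /cofactor Mf_minor.
rewrite (expand_det_col _ ord0) (bigD1 ord0) //= (bigD1 ord_max) //= big1 ?addr0; last first.
  move=> i /andP [hi0 himax]; rewrite mxE.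
  have h1 : ((i:nat) != 0%N) by exact hi0.
  have h2 : ((i:nat) != N.+1) by exact himax.
  have h3 := ltn_ord i.
  rewrite bump0 (bumpL 1 0) //.
  have e : (i.+1 = (i.-1).+2)%N by lia.
  by rewrite e Gi0 ?mul0r //; lia.
rewrite !mxE /cofactor !Mf_minor /= detK1 detK2 sgn2 !bump0 (bumpL 1 0) // G10 GN0.
rewrite add0n expr1 expr0.
ring.
Qed.
Lemma final : \det (AH N g h um al dh dq - lam%:M) =
    ((- lam) * ((lam - um) ^+ 2 - g * h - al ^+ 2)
       + g * h * (dh + lam * dq + 2%:R * al * dq))
    * \det (A2 N al - (lam - um)%:M).
Proof.
have e1 : AH N g h um al dh dq - lam%:M = Mf (N + 3) F.
  apply/matrixP => i j; rewrite !mxE /F -[(i:nat) == j]/(i == j).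
  by have [->|ne] := eqVneq i j; rewrite ?eqxx ?mulr1n ?mulr0n ?(negbTE ne).
have e2 : A2 N al - (lam - um)%:M = Mf N Q.
  apply/matrixP => i j; rewrite !mxE /Q -[(i:nat) == j]/(i == j).
  by have [->|ne] := eqVneq i j; rewrite ?eqxx ?mulr1n ?mulr0n ?(negbTE ne).
rewrite e1 e2 (Mf_cast _ _ (addn3 N)) colop mainG.
ring.
Qed.
End S.

Theorem theorem1 (R : realFieldType) (N : nat) (hN : (1 <= N)%N)
    (g h um al dh dq : R) (lam : R) :
  \det (AH N g h um al dh dq - lam%:M) =
    ((- lam) * ((lam - um) ^+ 2 - g * h - al ^+ 2)
       + g * h * (dh + lam * dq + 2%:R * al * dq))
    * \det (A2 N al - (lam - um)%:M).
Proof. exact: final. Qed.
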